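(* Let $\beta_1,\dots,\beta_N>0$ and $u,v\in\mathbb R$ with $\beta_i+u>0$ and $\beta_i+v>0$ for all $i$. Then $\mathbb E^{\boldsymbol\beta,\boldsymbol\beta}_{\mathrm{LGRW}}\big[V(\mathbf L)\big]<\infty$, where $V(\mathbf L)=\big(\sum_{j=1}^Ne^{L_2(j)-L_1(j-1)}\big)^{-(u+v)}e^{-v(L_1(N)-L_2(N))}$.
   Context: Under $\mathbb P^{\boldsymbol\beta,\boldsymbol\beta}_{\mathrm{LGRW}}$, $\mathbf L_1=(L_1(j))_{0\le j\le N}$ and $\mathbf L_2=(L_2(j))_{0\le j\le N}$ are independent random walks with $L_1(0)=L_2(0)=0$ and independent increments $L_i(j)-L_i(j-1)\sim\log\Gamma^{-1}(\beta_j)$, i.e. with density $e^{-\beta_jy-e^{-y}}/\Gamma(\beta_j)$ on $\mathbb R$; $\mathbf L=(\mathbf L_1,\mathbf L_2)$. *)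

(* Defs.v *)
From mathcomp Require Import all_boot all_order all_algebra.
From mathcomp Require Import all_classical all_reals all_analysis.
Set Implicit Arguments. Unset Strict Implicit. Unset Printing Implicit Defensive.
Import Order.TTheory GRing.Theory Num.Theory.
Local Open Scope classical_set_scope.
Local Open Scope ring_scope.

Definition GammaF {R : realType} (b : R) : R :=
  fine (\int[@lebesgue_measure R]_(t in [set t : R | (0 < t)%R])
          ((t `^ (b - 1)) * expR (- t))%R%:E)%E.

Definition loginvgamma_density {R : realType} (b y : R) : R :=
  expR (- (b * y) - expR (- y)) / GammaF b.

(* Iterated Lebesgue integral over the coordinates 1..n of a sequence
   z : nat -> R (coordinate 0 is unused and set to 0):
   iint n F = \int dz_n ... \int dz_1 F z.  For nonnegative measurable F this is
   the integral of F over R^n w.r.t. n-dimensional Lebesgue measure (Tonelli). *)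
Fixpoint iint {R : realType} (n : nat) (F : (nat -> R) -> \bar R) : \bar R :=
  match n with
  | 0%N => F (fun _ => 0)
  | n'.+1 => (\int[@lebesgue_measure R]_(t in [set: R])
               iint n' (fun z => F (fun i => if i == n then t else z i)))%E
  end.

Definition walk {R : realType} (x : nat -> R) (j : nat) : R :=
  \sum_(1 <= i < j.+1) x i.

Definition Vfun {R : realType} (N : nat) (u v : R) (L1 L2 : nat -> R) : R :=
  (\sum_(1 <= j < N.+1) expR (L2 j - L1 j.-1)) `^ (- (u + v))
  * expR (- (v * (L1 N - L2 N))).

(* E^{beta,beta}_{LGRW}[ F(L1, L2) ] for a nonnegative functional F, written as the
   integral against the joint density of the 2N independent increments. *)
Definition LGRW_expect {R : realType} (N : nat) (beta : nat -> R)
  (F : (nat -> R) -> (nat -> R) -> R) : \bar R :=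
  iint N (fun x => iint N (fun y =>
    (F (walk x) (walk y)
     * \prod_(1 <= j < N.+1)
         (loginvgamma_density (beta j) (x j) * loginvgamma_density (beta j) (y j)))%:E)).

(* Main.v *)
Require Import Defs.
From mathcomp Require Import all_boot all_order all_algebra.
From mathcomp Require Import all_classical all_reals all_analysis.
From mathcomp Require Import ring lra.
Import Order.TTheory GRing.Theory Num.Theory.
Import numFieldTopology.Exports numFieldNormedType.Exports.

Section S.
Local Open Scope ring_scope.
Local Open Scope classical_set_scope.
Context {R : realType}.
Local Notation mu := (@lebesgue_measure R).


Lemma int_le (D : set R) (f g : R -> \bar R) :
  (forall x, D x -> (0 <= f x)%E) -> (forall x, D x -> (f x <= g x)%E) ->
  (\int[mu]_(x in D) f x <= \int[mu]_(x in D) g x)%E.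
Proof.
move=> f0 fg.
have g0 : forall x, D x -> (0 <= g x)%E by move=> x Dx; exact: le_trans (f0 x Dx) (fg x Dx).
rewrite (ge0_integralE mu f0) (ge0_integralE mu g0) /=.
apply: ereal_sup_le => _ [h hf <-]; exists h => //= x.
apply: le_trans (hf x) _; rewrite /patch; case: ifP => // /set_mem Dx.
exact: fg.
Qed.

Lemma iint_ge0 n (F : (nat -> R) -> \bar R) :
  (forall z, (0 <= F z)%E) -> (0 <= iint n F)%E.
Proof.
elim: n F => [|n IH] F F0 /=; first exact: F0.
by apply: integral_ge0 => t _; apply: IH.
Qed.

Lemma iint_le n (F G : (nat -> R) -> \bar R) :
  (forall z, (0 <= F z)%E) -> (forall z, (F z <= G z)%E) -> (iint n F <= iint n G)%E.
Proof.
elim: n F G => [|n IH] F G F0 FG /=; first exact: FG.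
apply: int_le => t _; first by apply: iint_ge0.
by apply: IH.
Qed.


Lemma prod_nonneg (n : nat) (c : nat -> R) :
  (forall j, (1 <= j <= n)%N -> 0 <= c j) -> 0 <= \prod_(1 <= j < n.+1) c j.
Proof.
move=> c0; rewrite big_nat_cond; apply: prodr_ge0 => j /andP[/andP[j1 jn] _].
by apply: c0; rewrite j1 -ltnS jn.
Qed.

Lemma iint_prod n (g : nat -> R -> R) (c : nat -> R) :
  (forall j, measurable_fun setT (g j)) ->
  (forall j t, 0 <= g j t) ->
  (forall j, (1 <= j <= n)%N -> (\int[mu]_t (g j t)%:E <= (c j)%:E)%E) ->
  forall k, 0 <= k ->
  (iint n (fun z => ((\prod_(1 <= j < n.+1) g j (z j)) * k)%:E)
    <= ((\prod_(1 <= j < n.+1) c j) * k)%:E)%E.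
Proof.
move=> mg g0; elim: n => [|n IH] cb k k0 /=.
  by rewrite !big_geq.
have c0 : forall j, (1 <= j <= n.+1)%N -> 0 <= c j.
  move=> j jn; rewrite -lee_fin; apply: le_trans (cb j jn).
  by apply: integral_ge0 => t _; rewrite lee_fin.
have -> : (fun t => iint n (fun z => ((\prod_(1 <= j < n.+2)
      g j (if j == n.+1 then t else z j)) * k)%:E)) =
    (fun t => iint n (fun z => ((\prod_(1 <= j < n.+1) g j (z j)) * (g n.+1 t * k))%:E)).
  apply: funext => t; congr iint; apply: funext => z; congr EFin.
  rewrite big_nat_recr //= eqxx mulrA; congr (_ * _ * _).
  apply: eq_big_nat => j /andP[_ jn]; by rewrite ifF // (ltn_eqF jn).
apply: (@le_trans _ _ (\int[mu]_(t in setT)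
   (((\prod_(1 <= j < n.+1) c j) * k)%:E * (g n.+1 t)%:E))%E).
  apply: int_le => t _.
    by apply: iint_ge0 => z; rewrite lee_fin mulr_ge0 // ?prod_nonneg // ?mulr_ge0 //.
  rewrite -EFinM; have -> : \prod_(1 <= j < n.+1) c j * k * g n.+1 t = \prod_(1 <= j < n.+1) c j * (g n.+1 t * k) by rewrite mulrA mulrAC.
  apply: IH.
  - by move=> j /andP[j1 jn]; apply: cb; rewrite j1 ltnW.
  - by rewrite mulr_ge0.

rewrite ge0_integralZl_EFin //; last first.
  - by rewrite mulr_ge0 // prod_nonneg // => j /andP[j1 jn]; apply: c0; rewrite j1 ltnW.
  - by apply/measurable_realfun.measurable_EFinP; exact: mg.
  - by move=> t _; rewrite lee_fin.
rewrite (big_nat_recr n.+1) //= (mulrAC _ (c n.+1)) (EFinM (_ * k) (c n.+1)); apply: lee_pmul => //.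
  - by rewrite lee_fin mulr_ge0 // prod_nonneg // => j /andP[j1 jn]; apply: c0; rewrite j1 ltnW.
  - by apply: integral_ge0 => t _; rewrite lee_fin.
  - by apply: (cb n.+1); rewrite leqnn.
Qed.

Lemma expNge (t : R) : t <= 0 -> (1 - t / 2) ^+ 2 <= expR (- t).
Proof.
move=> t0.
have -> : - t = - t / 2 + - t / 2 by field.
rewrite expRD.
have h := expR_ge1Dx (- t / 2).
have h2 : 0 <= 1 - t / 2 by lra.
rewrite expr2; apply: ler_pM => //; lra.
Qed.

Lemma ptw (g t : R) : 0 < g ->
  - (g * t) - expR (- t) <= g ^+ 2 - Num.min g 1 * `|t|.
Proof.
move=> g0.
have hd0 : 0 < Num.min g 1 by rewrite lt_min g0 ltr01.
have hdg : Num.min g 1 <= g by rewrite ge_min lexx.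
have hd1 : Num.min g 1 <= 1 by rewrite ge_min lexx orbT.
set d := Num.min g 1 in hd0 hdg hd1 *.
have [t0|t0] := leP 0 t.
  rewrite ger0_norm //.
  have := expR_ge0 (- t).
  have : 0 <= (g - d) * t by rewrite mulr_ge0 // subr_ge0.
  have : 0 <= g ^+ 2 by rewrite sqr_ge0.
  nra.
rewrite ltr0_norm //.
have := @expNge t (ltW t0).
have : 0 <= (g + t / 2) ^+ 2 by rewrite sqr_ge0.
have : 0 <= (1 - d) * (- t) by rewrite mulr_ge0 // ?subr_ge0 // oppr_ge0 ltW.
nra.
Qed.


Lemma cont_expabs (d : R) : continuous (fun t : R => expR (- (d * `|t|))).
Proof.
move=> x; apply: continuous_comp; last exact: continuous_expR.
apply: (@continuousN _ R^o); apply: (@continuousM _ R^o (fun=> d) (fun t => `|t|)).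
  exact: cst_continuous.
exact: norm_continuous.
Qed.

Lemma exp_abs_int (d : R) : 0 < d -> (\int[mu]_t (expR (- (d * `|t|)))%:E < +oo)%E.
Proof.
move=> d0.
rewrite ge0_symfun_integralT //; last 2 first.
- exact: cont_expabs.
- by move=> t /=; rewrite normrN.
apply: lte_mul_pinfty => //.

apply: (@le_lt_trans _ _ (\int[mu]_x ((d^-1 * exponential_pdf d x)%:E))%E).
  rewrite integral_mkcond; apply: int_le => x _.
    by apply: erestrict_ge0 => y _; rewrite (@lee_fin R) expR_ge0.
  rewrite /patch; case: ifP => [/set_mem /= x0|_].
    by rewrite exponential_pdfE // lee_fin ger0_norm // mulrA mulVf ?gt_eqF // mul1r mulNr.
  have -> : (point : \bar R) = 0%E by []. by rewrite lee_fin mulr_ge0 // ?invr_ge0 ?(ltW d0) // exponential_pdf_ge0 // ltW.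
under eq_integral do rewrite EFinM.
rewrite ge0_integralZl_EFin //.
- by rewrite integral_exponential_pdf // mule1 ltry.
- by move=> x _; rewrite lee_fin exponential_pdf_ge0 // ltW.
- by apply/measurable_realfun.measurable_EFinP; apply: measurable_exponential_pdf; rewrite ltW.
- by rewrite invr_ge0 ltW.
Qed.


Definition cf (b a1 a2 : R) (t : R) :=
  (expR (a1 * t) + expR (a2 * t)) * loginvgamma_density b t.

Lemma GammaF_ge0 (b : R) : 0 <= GammaF b.
Proof.
apply: fine_ge0; apply: integral_ge0 => t _.
by rewrite lee_fin mulr_ge0 // ?powR_ge0 // expR_ge0.
Qed.

Lemma dens_ge0 (b t : R) : 0 <= loginvgamma_density b t.
Proof. by rewrite /loginvgamma_density mulr_ge0 // ?expR_ge0 // invr_ge0 GammaF_ge0. Qed.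

Lemma cf_ge0 b a1 a2 t : 0 <= cf b a1 a2 t.
Proof. by rewrite /cf mulr_ge0 // ?dens_ge0 // addr_ge0 // expR_ge0. Qed.

Lemma cont_expl (a c : R) : continuous (fun t : R => expR (a * t + c)).
Proof.
move=> x; apply: continuous_comp; last exact: continuous_expR.
apply: (@continuousD _ R^o).
  apply: (@continuousM _ R^o (fun=> a) (fun t => t)); [exact: cst_continuous | exact: cvg_id].
exact: cst_continuous.
Qed.

Lemma cf_cont b a1 a2 : continuous (cf b a1 a2).
Proof.
move=> x.
have H1 : {for x, continuous (fun t : R => expR (a1 * t) + expR (a2 * t))}.
  apply: (@continuousD _ R^o _ (fun t : R => expR (a1 * t)) (fun t : R => expR (a2 * t))).
    by have := cont_expl a1 0 x; under eq_fun do rewrite addr0.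
  by have := cont_expl a2 0 x; under eq_fun do rewrite addr0.
have H2 : {for x, continuous (fun t : R => expR (- (b * t) - expR (- t)))}.
  apply: continuous_comp; last exact: continuous_expR.
  apply: (@continuousB _ R^o _ (fun t : R => - (b * t)) (fun t : R => expR (- t))).
    apply: (@continuousN _ R^o _ (fun t : R => b * t)).
    apply: (@continuousM _ R^o (fun=> b) (fun t => t)); [exact: cst_continuous | exact: cvg_id].
  by have := cont_expl (-1) 0 x; under eq_fun do rewrite addr0 mulN1r.
have H3 : {for x, continuous (fun t : R => expR (- (b * t) - expR (- t)) / GammaF b)}.
  apply: (@continuousM _ R^o (fun t : R => expR (- (b * t) - expR (- t))) (fun=> (GammaF b)^-1)) => //.
  exact: cst_continuous.
exact: (@continuousM _ R^o _ _ x H1 H3).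
Qed.


Lemma one_term (b a t : R) : a < b ->
  expR (a * t) * expR (- (b * t) - expR (- t)) <=
  expR ((b - a) ^+ 2) * expR (- (Num.min (b - a) 1 * `|t|)).
Proof.
move=> ab; rewrite -!expRD ler_expR.
have := @ptw (b - a) t; rewrite subr_gt0 => /(_ ab).
have -> : a * t + (- (b * t) - expR (- t)) = - ((b - a) * t) - expR (- t) by ring.
by [].
Qed.

Lemma cf_int b a1 a2 : 0 < b -> a1 < b -> a2 < b ->
  (\int[mu]_t (cf b a1 a2 t)%:E < +oo)%E.
Proof.
move=> b0 h1 h2.
set d1 := Num.min (b - a1) 1; set d2 := Num.min (b - a2) 1.
set d := Num.min d1 d2.
have d0 : 0 < d by rewrite !lt_min !subr_gt0 h1 h2 ltr01.
have dd1 : d <= d1 by rewrite ge_min lexx.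
have dd2 : d <= d2 by rewrite ge_min lexx orbT.
set K := (GammaF b)^-1 * (expR ((b - a1) ^+ 2) + expR ((b - a2) ^+ 2)).
have K0 : 0 <= K by rewrite mulr_ge0 ?invr_ge0 ?GammaF_ge0 // addr_ge0 // expR_ge0.
apply: (@le_lt_trans _ _ (\int[mu]_t ((K * expR (- (d * `|t|)))%:E))%E).
  apply: int_le => t _; first by rewrite lee_fin cf_ge0.
  rewrite lee_fin /cf /loginvgamma_density /K mulrA [_ * _^-1]mulrC -!mulrA.
  apply: ler_wpM2l; first by rewrite invr_ge0 GammaF_ge0.
  rewrite mulrDl mulrDl; apply: lerD.
    apply: le_trans (@one_term b a1 t h1) _; apply: ler_wpM2l; first exact: expR_ge0.
    by rewrite ler_expR lerN2 ler_wpM2r.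
  apply: le_trans (@one_term b a2 t h2) _; apply: ler_wpM2l; first exact: expR_ge0.
  by rewrite ler_expR lerN2 ler_wpM2r.
under eq_integral do rewrite EFinM.
rewrite ge0_integralZl_EFin //.
- apply: lte_mul_pinfty; [by rewrite lee_fin | by [] | ].
  exact: exp_abs_int.
- apply/measurable_realfun.measurable_EFinP.
  exact: measurable_realfun.continuous_measurable_fun (cont_expabs d).
Qed.

End S.

Section P.
Local Open Scope ring_scope.
Local Open Scope classical_set_scope.
Context {R : realType}.

Lemma sum_mono (f : nat -> R) (k n : nat) : (forall i, 0 <= f i) -> (k <= n)%N ->
  \sum_(1 <= i < k) f i <= \sum_(1 <= i < n) f i.
Proof.
move=> f0 kn; have [k1|k1] := leqP k 1.
  by rewrite big_geq // sumr_ge0.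
rewrite [leRHS](big_cat_nat (n:=k)) ?(ltnW k1) //= lerDl sumr_ge0 //.
Qed.

Lemma sum_ge_term (f : nat -> R) (j n : nat) : (forall i, 0 <= f i) -> (1 <= j <= n)%N ->
  f j <= \sum_(1 <= i < n.+1) f i.
Proof.
move=> f0 /andP[j1 jn].
rewrite (big_cat_nat (n:=j)) ?(leqW jn) //= [X in _ + X]big_ltn ?ltnS //.
by rewrite addrCA lerDl addr_ge0 // sumr_ge0.
Qed.

Lemma walk0 (x : nat -> R) : walk x 0 = 0.
Proof. by rewrite /walk big_geq. Qed.

Lemma walk1 (x : nat -> R) : walk x 1 = x 1%N.
Proof. by rewrite /walk big_nat1. Qed.

Lemma walkS (x : nat -> R) n : walk x n.+1 = walk x n + x n.+1.
Proof. by rewrite /walk big_nat_recr. Qed.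

Definition mm (u v : R) := Num.min (Num.max v 0) (u + v).
Definition ax2 (u v : R) := if u + v < 0 then u else mm u v - v.
Definition ay2 (u v : R) := if u + v < 0 then v else v - mm u v.
Definition Cc (N : nat) (u v : R) := if u + v < 0 then - (u + v) * ln (N%:R : R) else 0.

Definition Ssum (N : nat) (x y : nat -> R) :=
  \sum_(1 <= j < N.+1) expR (walk y j - walk x j.-1).

Lemma Ssum_ge (N : nat) x y j : (1 <= j <= N)%N ->
  expR (walk y j - walk x j.-1) <= Ssum N x y.
Proof. by move=> jN; apply: (sum_ge_term (fun j => expR (walk y j - walk x j.-1))) => // i; apply: expR_ge0. Qed.

Lemma Ssum_gt0 (N : nat) x y : (0 < N)%N -> 0 < Ssum N x y.
Proof.
move=> N0; apply: lt_le_trans (@Ssum_ge N x y 1%N _); first exact: expR_gt0.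
by rewrite leqnn N0.
Qed.

Lemma finish (N : nat) (u v : R) (x y : nat -> R) (cx cy : nat -> R) : (0 < N)%N ->
  (forall j, cx j = - v \/ cx j = ax2 u v) ->
  (forall j, cy j = - u \/ cy j = ay2 u v) ->
  - (u + v) * ln (Ssum N x y) - v * (walk x N - walk y N) <=
    Cc N u v + \sum_(1 <= j < N.+1) (cx j * x j + cy j * y j) ->
  Vfun N u v (walk x) (walk y) <=
  expR (Cc N u v) * \prod_(1 <= j < N.+1) (expR (- v * x j) + expR (ax2 u v * x j))
    * \prod_(1 <= j < N.+1) (expR (- u * y j) + expR (ay2 u v * y j)).
Proof.
move=> N0 hx hy hb.
rewrite /Vfun /powR -/(Ssum N x y) gt_eqF ?Ssum_gt0 // -expRD.
apply: (@le_trans _ _ (expR (Cc N u v + \sum_(1 <= j < N.+1) (cx j * x j + cy j * y j)))).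
  by rewrite ler_expR.
rewrite expRD expR_sum -mulrA -big_split /=.
apply: ler_wpM2l; first exact: expR_ge0.
apply: ler_prod => j _.
rewrite expRD mulr_ge0 ?expR_ge0 //=.
apply: ler_pM; rewrite ?expR_ge0 //.
  by case: (hx j) => ->; rewrite ?lerDl ?lerDr expR_ge0.
by case: (hy j) => ->; rewrite ?lerDl ?lerDr expR_ge0.
Qed.


Lemma le_ln_of (a S : R) : expR a <= S -> a <= ln S.
Proof.
move=> h; have S0 : 0 < S by apply: lt_le_trans h; apply: expR_gt0.
by rewrite -ler_expR lnK // posrE.
Qed.

Lemma case_pos N u v (x y : nat -> R) : (0 < N)%N -> 0 <= u + v ->
  Vfun N u v (walk x) (walk y) <=
  expR (Cc N u v) * \prod_(1 <= j < N.+1) (expR (- v * x j) + expR (ax2 u v * x j))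
    * \prod_(1 <= j < N.+1) (expR (- u * y j) + expR (ay2 u v * y j)).
Proof.
move=> N0 p0.
have hp : (u + v < 0) = false by apply/negbTE; rewrite -leNgt.
set m := mm u v.
have m0 : 0 <= m by rewrite /m /mm le_min le_max lexx orbT p0.
have mp : m <= u + v by rewrite /m /mm ge_min lexx orbT.
have eax : ax2 u v = m - v by rewrite /ax2 hp.
have eay : ay2 u v = v - m by rewrite /ay2 hp.
case: N N0 => // N' _.
apply: (@finish N'.+1 u v x y (fun j => if (j < N'.+1)%N then m - v else - v)
   (fun j => if j == 1%N then - u else v - m)) => //.
- by move=> j; case: ifP; auto.
- by move=> j; case: ifP; auto.
set L := ln (Ssum N'.+1 x y).
have L1 : y 1%N <= L.
  rewrite /L; apply: le_ln_of; have := @Ssum_ge N'.+1 x y 1%N isT.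
  by rewrite walk1 walk0 subr0.
have LN : walk y N'.+1 - walk x N' <= L.
  by rewrite /L; apply: le_ln_of; apply: (@Ssum_ge N'.+1 x y N'.+1); rewrite /= leqnn.
have -> : Cc N'.+1 u v = 0 by rewrite /Cc hp.
rewrite add0r big_split /=.
have -> : \sum_(1 <= j < N'.+2) (if (j < N'.+1)%N then m - v else - v) * x j
    = (m - v) * walk x N' + - v * x N'.+1.
  rewrite big_nat_recr //= ltnn; congr (_ + _).
  rewrite /walk mulr_sumr; apply: eq_big_nat => j /andP[_ jN].
  by rewrite jN.
have -> : \sum_(1 <= j < N'.+2) (if j == 1%N then - u else v - m) * y j
    = - u * y 1%N + (v - m) * \sum_(2 <= j < N'.+2) y j.
  rewrite big_ltn //= ?eqxx; congr (_ + _).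
  rewrite mulr_sumr; apply: eq_big_nat => j /andP[j2 _].
  by rewrite ifF //; apply/negbTE; rewrite neq_ltn j2 orbT.
have eY : walk y N'.+1 = y 1%N + \sum_(2 <= j < N'.+2) y j by rewrite /walk big_ltn.
rewrite walkS eY.
rewrite eY in LN.
have h1 : 0 <= (u + v - m) * (L - y 1%N) by rewrite mulr_ge0 // subr_ge0.
have h2 : 0 <= m * (L - (y 1%N + \sum_(2 <= j < N'.+2) y j - walk x N')) by rewrite mulr_ge0 // subr_ge0.
nra.
Qed.


Lemma case_neg N u v (x y : nat -> R) : (0 < N)%N -> u + v < 0 ->
  Vfun N u v (walk x) (walk y) <=
  expR (Cc N u v) * \prod_(1 <= j < N.+1) (expR (- v * x j) + expR (ax2 u v * x j))
    * \prod_(1 <= j < N.+1) (expR (- u * y j) + expR (ay2 u v * y j)).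
Proof.
move=> N0 hp.
have eax : ax2 u v = u by rewrite /ax2 hp.
have eay : ay2 u v = v by rewrite /ay2 hp.
apply: (@finish N u v x y (fun j => if x j < 0 then u else - v)
   (fun j => if 0 < y j then - u else v)) => //.
- by move=> j; case: ifP; rewrite eax; auto.
- by move=> j; case: ifP; rewrite eay; auto.
set q := - (u + v).
have q0 : 0 < q by rewrite /q oppr_gt0.
set T := \sum_(1 <= i < N.+1) (Num.max (y i) 0 + Num.max (- x i) 0).
have -> : Cc N u v = q * ln (N%:R : R) by rewrite /Cc hp.
rewrite (eq_bigr (fun j => q * (Num.max (y j) 0 + Num.max (- x j) 0) + (- v * x j + v * y j))); last first.
  move=> j _.
  have ex : (if x j < 0 then u else - v) * x j = q * Num.max (- x j) 0 + - v * x j.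
    case: ltP => h.
      by rewrite max_l ?oppr_ge0 ?(ltW h) //; rewrite /q; ring.
    by rewrite max_r ?oppr_le0 // mulr0 add0r.
  have ey : (if 0 < y j then - u else v) * y j = q * Num.max (y j) 0 + v * y j.
    case: ltP => h.
      by rewrite /q; ring.
    by rewrite mulr0 add0r.
  rewrite ex ey; ring.
rewrite big_split /= -mulr_sumr -/T big_split /= -!mulr_sumr.
set L := ln (Ssum N x y).
have LT : L <= ln (N%:R : R) + T.
  have SN : Ssum N x y <= N%:R * expR T.
    apply: (@le_trans _ _ (\sum_(1 <= j < N.+1) expR T)); last first.
      by rewrite sumr_const_nat subn1 /= mulr_natl.
    apply: ler_sum_nat => j /andP[j1 jN]; rewrite ler_expR.
    rewrite /T big_split /=.
    apply: lerD.
      apply: (@le_trans _ _ (\sum_(1 <= i < j.+1) Num.max (y i) 0)).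
        by apply: ler_sum_nat => i _; rewrite le_max lexx.
      by apply: sum_mono => // i; rewrite le_max lexx orbT.
    rewrite /walk -sumrN.
    apply: (@le_trans _ _ (\sum_(1 <= i < j.-1.+1) Num.max (- x i) 0)).
      by apply: ler_sum_nat => i _; rewrite le_max lexx.
    apply: sum_mono => //; first by move=> i; rewrite le_max lexx orbT.
    by rewrite ltnS (leq_trans (leq_pred j)).
  have S0 := @Ssum_gt0 N x y N0.
  have NT : 0 < (N%:R : R) * expR T by rewrite mulr_gt0 ?expR_gt0 // ltr0n.
  rewrite /L -(expRK T) -lnM ?posrE ?expR_gt0 ?ltr0n //.
  by rewrite ler_ln ?posrE.
have h1 : 0 <= q * (ln (N%:R : R) + T - L) by rewrite mulr_ge0 ?subr_ge0 // ltW.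
rewrite /q in h1 *.
rewrite /walk; nra.
Qed.

End P.

Local Open Scope ring_scope.

Theorem proposition3p15 (R : realType) (N : nat) (beta : nat -> R) (u v : R) :
  (0 < N)%N ->
  (forall j, (1 <= j <= N)%N -> 0 < beta j) ->
  (forall j, (1 <= j <= N)%N -> 0 < beta j + u) ->
  (forall j, (1 <= j <= N)%N -> 0 < beta j + v) ->
  (LGRW_expect N beta (Vfun N u v) < +oo)%E.
Proof.
move=> N0 hb hu hv.
set C := Cc N u v.
set A := fun j t => cf (beta j) (- v) (ax2 u v) t.
set B := fun j t => cf (beta j) (- u) (ay2 u v) t.
have hax : forall j, (1 <= j <= N)%N -> ax2 u v < beta j.
  move=> j jN; have := hb j jN; have := hu j jN; have := hv j jN.
  rewrite /ax2; case: ifP => hp; first by lra.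
  have hm1 : mm u v <= Num.max v 0 by rewrite /mm ge_min lexx.
  move: hm1; case: (leP 0 v) => hv0; lra.
have hay : forall j, (1 <= j <= N)%N -> ay2 u v < beta j.
  move=> j jN; have := hb j jN; have := hu j jN; have := hv j jN.
  rewrite /ay2; case: ifP => hp; first by lra.
  have hm1 : v <= Num.max v 0 by rewrite le_max lexx.
  move: hm1; rewrite /mm; case: (leP (Num.max v 0) (u + v)) => h; lra.
have Aint : forall j, (1 <= j <= N)%N -> (\int[lebesgue_measure]_t (A j t)%:E < +oo)%E.
  move=> j jN; apply: cf_int; [exact: hb | | exact: hax].
  by have := hv j jN; lra.
have Bint : forall j, (1 <= j <= N)%N -> (\int[lebesgue_measure]_t (B j t)%:E < +oo)%E.
  move=> j jN; apply: cf_int; [exact: hb | | exact: hay].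
  by have := hu j jN; lra.
set cA := fun j => fine (\int[lebesgue_measure]_t (A j t)%:E).
set cB := fun j => fine (\int[lebesgue_measure]_t (B j t)%:E).
have hA : forall j, (1 <= j <= N)%N -> (\int[lebesgue_measure]_t (A j t)%:E <= (cA j)%:E)%E.
  move=> j jN; rewrite /cA fineK // ge0_fin_numE ?Aint //.
  by apply: integral_ge0 => t _; rewrite lee_fin cf_ge0.
have hB : forall j, (1 <= j <= N)%N -> (\int[lebesgue_measure]_t (B j t)%:E <= (cB j)%:E)%E.
  move=> j jN; rewrite /cB fineK // ge0_fin_numE ?Bint //.
  by apply: integral_ge0 => t _; rewrite lee_fin cf_ge0.
have mA : forall j, measurable_fun setT (A j).
  by move=> j; apply: measurable_realfun.continuous_measurable_fun; apply: cf_cont.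
have mB : forall j, measurable_fun setT (B j).
  by move=> j; apply: measurable_realfun.continuous_measurable_fun; apply: cf_cont.
have A0 : forall j t, 0 <= A j t by move=> j t; apply: cf_ge0.
have B0 : forall j t, 0 <= B j t by move=> j t; apply: cf_ge0.
have PA0 : forall x : nat -> R, 0 <= \prod_(1 <= j < N.+1) A j (x j).
  by move=> x; apply: prodr_ge0 => j _.
have PB0 : forall x : nat -> R, 0 <= \prod_(1 <= j < N.+1) B j (x j).
  by move=> x; apply: prodr_ge0 => j _.
have cA0 : 0 <= \prod_(1 <= j < N.+1) cA j.
  by apply: prodr_ge0 => j _; apply: fine_ge0; apply: integral_ge0 => t _; rewrite lee_fin.
have cB0 : 0 <= \prod_(1 <= j < N.+1) cB j.
  by apply: prodr_ge0 => j _; apply: fine_ge0; apply: integral_ge0 => t _; rewrite lee_fin.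
have ptw : forall x y : nat -> R,
  Vfun N u v (walk x) (walk y) *
    \prod_(1 <= j < N.+1) (loginvgamma_density (beta j) (x j) * loginvgamma_density (beta j) (y j))
  <= (\prod_(1 <= j < N.+1) B j (y j)) * (expR C * \prod_(1 <= j < N.+1) A j (x j)).
  move=> x y.
  have hV : Vfun N u v (walk x) (walk y) <=
    expR C * \prod_(1 <= j < N.+1) (expR (- v * x j) + expR (ax2 u v * x j))
    * \prod_(1 <= j < N.+1) (expR (- u * y j) + expR (ay2 u v * y j)).
    by case: (ltP (u + v) 0) => hp; [apply: case_neg | apply: case_pos].
  have -> : (\prod_(1 <= j < N.+1) B j (y j)) * (expR C * \prod_(1 <= j < N.+1) A j (x j)) =
    (expR C * \prod_(1 <= j < N.+1) (expR (- v * x j) + expR (ax2 u v * x j))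
    * \prod_(1 <= j < N.+1) (expR (- u * y j) + expR (ay2 u v * y j))) *
    \prod_(1 <= j < N.+1) (loginvgamma_density (beta j) (x j) * loginvgamma_density (beta j) (y j)).
    rewrite /A /B /cf !big_split /=; ring.
  apply: ler_wpM2r => //.
  by apply: prodr_ge0 => j _; rewrite mulr_ge0 // dens_ge0.
rewrite /LGRW_expect.
apply: (@le_lt_trans _ _ (iint N (fun x => iint N (fun y =>
   ((\prod_(1 <= j < N.+1) B j (y j)) * (expR C * \prod_(1 <= j < N.+1) A j (x j)))%:E)))).
  apply: iint_le => x.
    apply: iint_ge0 => y; rewrite lee_fin mulr_ge0 //.
      by rewrite /Vfun mulr_ge0 // ?powR_ge0 // expR_ge0.
    by apply: prodr_ge0 => j _; rewrite mulr_ge0 // dens_ge0.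
  apply: iint_le => y; last by rewrite lee_fin ptw.
  rewrite lee_fin mulr_ge0 //.
    by rewrite /Vfun mulr_ge0 // ?powR_ge0 // expR_ge0.
  by apply: prodr_ge0 => j _; rewrite mulr_ge0 // dens_ge0.
apply: (@le_lt_trans _ _ (iint N (fun x =>
   ((\prod_(1 <= j < N.+1) A j (x j)) * ((\prod_(1 <= j < N.+1) cB j) * expR C))%:E))).
  apply: iint_le => x.
    by apply: iint_ge0 => y; rewrite lee_fin mulr_ge0 // mulr_ge0 // expR_ge0.
  apply: le_trans (@iint_prod R N B cB mB B0 hB _ _) _.
    by rewrite mulr_ge0 // expR_ge0.
  by rewrite lee_fin le_eqVlt; apply/orP; left; apply/eqP; ring.
apply: le_lt_trans (@iint_prod R N A cA mA A0 hA _ _) _.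
  by rewrite mulr_ge0 // expR_ge0.
exact: ltry.
Qed.
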